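(* For any term $t$, any type $T$, any unit type $U$ and any context $\Gamma$ of the Scalar type system: if $\Gamma\vdash\lambda x\,t:U\to T$, then $\Gamma,x:U\vdash t:T$.
   Context: Fix a commutative ring $(\mathcal{S},+,\times)$. Terms: $t,r ::= b \mid (t)\,r \mid \mathbf{0} \mid \alpha.t \mid t+r$, basis terms $b ::= x \mid \lambda x\,t$, modulo associativity and commutativity of $+$. Types: $T ::= U \mid \forall X.T \mid \alpha.T \mid \overline{0}$; unit types: $U ::= X \mid U\to T \mid \forall X.U$. Type variables are only substituted by unit types; $(\alpha.T)[U/X]=\alpha.T[U/X]$. Type equivalence $\equiv$ is the least congruence with $\alpha.\overline0\equiv\overline0$, $0.T\equiv\overline0$, $1.T\equiv T$, $\alpha.(\beta.T)\equiv(\alpha\times\beta).T$, $\forall X.\alpha.T\equiv\alpha.\forall X.T$. A context is a set of distinct term variables with unit types. Typing rules: (ax) $\Gamma,x:U\vdash x:U$; ($\equiv$) from $\Gamma\vdash t:T$ and $T\equiv S$ infer $\Gamma\vdash t:S$; ($\to_E$) from $\Gamma\vdash t:\alpha.(U\to T)$ and $\Gamma\vdash r:\beta.U$ infer $\Gamma\vdash (t)\,r:(\alpha\times\beta).T$; ($\to_I$) from $\Gamma,x:U\vdash t:T$ infer $\Gamma\vdash\lambda x\,t:U\to T$; ($\forall_E$) from $\Gamma\vdash t:\forall X.T$ infer $\Gamma\vdash t:T[U/X]$, $U$ unit; ($\forall_I$) from $\Gamma\vdash t:T$ with $X$ not free in $\Gamma$ infer $\Gamma\vdash t:\forall X.T$;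 ($ax_{\overline0}$) $\Gamma\vdash\mathbf 0:\overline0$; ($+_I$) from $\Gamma\vdash t:\alpha.T$ and $\Gamma\vdash r:\beta.T$ infer $\Gamma\vdash t+r:(\alpha+\beta).T$; ($s_I$) from $\Gamma\vdash t:T$ infer $\Gamma\vdash\alpha.t:\alpha.T$. *)

(* Defs.v *)
From mathcomp Require Import all_boot all_algebra.
Set Implicit Arguments. Unset Strict Implicit. Unset Printing Implicit Defensive.
Import GRing.Theory.
Local Open Scope ring_scope.

Section Scalar.
Variable R : comPzRingType.

(* Terms: de Bruijn sterm variables; the lambda binds index 0. *)
Inductive sterm : Type :=
| tVar  : nat -> sterm
| tLam  : sterm -> sterm
| tApp  : sterm -> sterm -> sterm
| tZero : sterm
| tScal : R -> sterm -> sterm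
| tPlus : sterm -> sterm -> sterm.

(* Terms are taken modulo associativity and commutativity of +. *)
Inductive ac_eq : sterm -> sterm -> Prop :=
| ac_refl t : ac_eq t t
| ac_sym t r : ac_eq t r -> ac_eq r t
| ac_trans t r s : ac_eq t r -> ac_eq r s -> ac_eq t s
| ac_lam t t' : ac_eq t t' -> ac_eq (tLam t) (tLam t')
| ac_app t t' r r' : ac_eq t t' -> ac_eq r r' -> ac_eq (tApp t r) (tApp t' r')
| ac_scal a t t' : ac_eq t t' -> ac_eq (tScal a t) (tScal a t')
| ac_plus t t' r r' : ac_eq t t' -> ac_eq r r' -> ac_eq (tPlus t r) (tPlus t' r')
| ac_comm t r : ac_eq (tPlus t r) (tPlus r t)
| ac_assoc t r s : ac_eq (tPlus (tPlus t r) s) (tPlus t (tPlus r s)).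

(* Raw types: de Bruijn stype variables; TForall binds index 0. *)
Inductive stype : Type :=
| TVar    : nat -> stype
| TArrow  : stype -> stype -> stype
| TForall : stype -> stype
| TScal   : R -> stype -> stype
| TZero   : stype.

(* Grammar: T ::= U | forall X.T | a.T | 0 ;  U ::= X | U -> T | forall X.U *)
Fixpoint is_unit (T : stype) : bool :=
  match T with
  | TVar _ => true
  | TArrow U T' => is_unit U && wf T'
  | TForall U => is_unit U
  | _ => false
  end
with wf (T : stype) : bool :=
  match T with
  | TVar _ => true
  | TArrow U T' => is_unit U && wf T'
  | TForall T' => wf T'
  | TScal _ T' => wf T'
  | TZero => true
  end.

Fixpoint tshift (c : nat) (T : stype) : stype :=
  match T with
  | TVar n => if (c <= n)%N then TVar n.+1 else TVar n
  | TArrow U T' => TArrow (tshift c U) (tshift c T')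
  | TForall T' => TForall (tshift c.+1 T')
  | TScal a T' => TScal a (tshift c T')
  | TZero => TZero
  end.

Fixpoint tsubst (k : nat) (U : stype) (T : stype) : stype :=
  match T with
  | TVar n => if n == k then U else if (k < n)%N then TVar n.-1 else TVar n
  | TArrow V T' => TArrow (tsubst k U V) (tsubst k U T')
  | TForall T' => TForall (tsubst k.+1 (tshift 0 U) T')
  | TScal a T' => TScal a (tsubst k U T')
  | TZero => TZero
  end.

Inductive tequiv : stype -> stype -> Prop :=
| te_refl T : wf T -> tequiv T T
| te_sym T S : tequiv T S -> tequiv S T
| te_trans T S Q : tequiv T S -> tequiv S Q -> tequiv T Q
| te_scal0 a : tequiv (TScal a TZero) TZero
| te_zero T : wf T -> tequiv (TScal 0 T) TZero
| te_one T : wf T -> tequiv (TScal 1 T) T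
| te_mul a b T : wf T -> tequiv (TScal a (TScal b T)) (TScal (a * b) T)
| te_forall_scal a T : wf T ->
    tequiv (TForall (TScal a T)) (TScal a (TForall T))
| te_cong_arrow U U' T T' : is_unit U -> is_unit U' ->
    tequiv U U' -> tequiv T T' -> tequiv (TArrow U T) (TArrow U' T')
| te_cong_forall T T' : tequiv T T' -> tequiv (TForall T) (TForall T')
| te_cong_scal a T T' : tequiv T T' -> tequiv (TScal a T) (TScal a T').

(* Typing judgement Gamma |- t : T; a context is a list of (unit) types,
   the i-th entry being the stype of de Bruijn variable i. *)
Inductive typ : seq stype -> sterm -> stype -> Prop :=
| ty_ac G t t' T : typ G t T -> ac_eq t t' -> typ G t' T
| ty_ax G n U : onth G n = Some U -> typ G (tVar n) U
| ty_equiv G t T S : typ G t T -> tequiv T S -> typ G t S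
| ty_arrE G t r a b U T :
    typ G t (TScal a (TArrow U T)) -> typ G r (TScal b U) ->
    typ G (tApp t r) (TScal (a * b) T)
| ty_arrI G t U T : is_unit U -> typ (U :: G) t T -> typ G (tLam t) (TArrow U T)
| ty_forallE G t T U : is_unit U -> typ G t (TForall T) -> typ G t (tsubst 0 U T)
| ty_forallI G t T : typ (map (tshift 0) G) t T -> typ G t (TForall T)
| ty_ax0 G : typ G tZero TZero
| ty_plusI G t r a b T :
    typ G t (TScal a T) -> typ G r (TScal b T) -> typ G (tPlus t r) (TScal (a + b) T)
| ty_sI G t a T : typ G t T -> typ G (tScal a t) (TScal a T).

End Scalar.

(* Main.v *)
Require Import Defs.
From mathcomp Require Import all_boot all_algebra.
From mathcomp Require Import zify.
Set Implicit Arguments. Unset Strict Implicit. Unset Printing Implicit Defensive.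
Import GRing.Theory.

Section P.
Variable R : comPzRingType.
Local Notation ty := (stype R).
Local Open Scope ring_scope.

Lemma shift_pres (T : ty) c : (is_unit T -> is_unit (tshift c T)) /\ (wf T -> wf (tshift c T)).
Proof.
elim: T c => [n|U IU T IT|T IT|a T IT|] c /=.
- by case: ifP.
- move: (IU c) (IT c) => [IU1 IU2] [IT1 IT2].
  split; move/andP=> [h1 h2]; apply/andP; split; auto.
- move: (IT c.+1) => [h1 h2]; split; auto.
- move: (IT c) => [h1 h2]; split; auto.
- by [].
Qed.

Lemma subst_pres (T : ty) k (V : ty) : is_unit V ->
  (is_unit T -> is_unit (tsubst k V T)) /\ (wf T -> wf (tsubst k V T)).
Proof.
have uw : forall X : ty, is_unit X -> wf X.
  elim=> //= [U _ T _|T IT] //.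
elim: T k V => [n|U IU T IT|T IT|a T IT|] k V HV /=.
- case: eqP => _; first by split => _; [|apply: uw].
  by case: ifP.
- move: (IU k V HV) (IT k V HV) => [IU1 IU2] [IT1 IT2].
  split; move/andP=> [h1 h2]; apply/andP; split; auto.
- have HV' : is_unit (tshift 0 V) by apply (shift_pres V 0).
  move: (IT k.+1 _ HV') => [h1 h2]; split; auto.
- move: (IT k V HV) => [h1 h2]; split; auto.
- by [].
Qed.

Ltac vcase := repeat (simpl; first [ case: ifP => /= ? | case: eqP => /= ? ]); try done; try lia; try (congr TVar; lia).

Lemma shift_shift (V : ty) c d : (c <= d)%N -> tshift c (tshift d V) = tshift d.+1 (tshift c V).
Proof.
elim: V c d => [n|U IU T IT|T IT|a T IT|] c d H /=.
- vcase.
- by rewrite IU // IT.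
- by rewrite IT.
- by rewrite IT.
- by [].
Qed.

Lemma subst_shift_id (X V : ty) k : tsubst k V (tshift k X) = X.
Proof.
elim: X k V => [n|U IU T IT|T IT|a T IT|] k V /=.
- vcase.
- by rewrite IU IT.
- by rewrite IT.
- by rewrite IT.
- by [].
Qed.

Lemma subst_shift_comm (X V : ty) c k : (c <= k)%N ->
  tsubst k.+1 (tshift c V) (tshift c X) = tshift c (tsubst k V X).
Proof.
elim: X c k V => [n|U IU T IT|T IT|a T IT|] c k V H /=.
- vcase.
- by rewrite IU // IT.
- by rewrite -IT // shift_shift.
- by rewrite IT.
- by [].
Qed.

Lemma subst_subst (T V W : ty) j k : (j <= k)%N ->
  tsubst j (tsubst k V W) (tsubst k.+1 (tshift j V) T) = tsubst k V (tsubst j W T).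
Proof.
elim: T j k V W => [n|U IU T IT|T IT|a T IT|] j k V W H /=.
- vcase; rewrite ?subst_shift_id //.
- by rewrite IU // IT.
- by rewrite -(subst_shift_comm W V (c:=0)) // shift_shift // IT.
- by rewrite IT.
- by [].
Qed.

Lemma unit_wf (X : ty) : is_unit X -> wf X.
Proof. by elim: X => //= U _ T _. Qed.

Lemma tequiv_wf (A B : ty) : tequiv A B -> wf A /\ wf B.
Proof.
elim=> //=; try by intuition.
Qed.

Lemma tequiv_shift (A B : ty) c : tequiv A B -> tequiv (tshift c A) (tshift c B).
Proof.
move=> H; elim: H c => /=.
- move=> T hT c; apply: te_refl; by apply shift_pres.
- move=> T S _ IH c; apply: te_sym; by apply IH.
- move=> T S Q _ I1 _ I2 c; apply: te_trans (I1 c) (I2 c).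
- move=> a c; apply: te_scal0.
- move=> T hT c; apply: te_zero; by apply shift_pres.
- move=> T hT c; apply: te_one; by apply shift_pres.
- move=> a b T hT c; apply: te_mul; by apply shift_pres.
- move=> a T hT c; apply: te_forall_scal; by apply shift_pres.
- move=> U U' T T' hU hU' _ I1 _ I2 c; apply: te_cong_arrow; try apply shift_pres; auto.
- move=> T T' _ I c; apply: te_cong_forall; auto.
- move=> a T T' _ I c; apply: te_cong_scal; auto.
Qed.

Lemma tequiv_subst (A B : ty) k V : is_unit V -> tequiv A B -> tequiv (tsubst k V A) (tsubst k V B).
Proof.
move=> HV H; elim: H k V HV => /=.
- move=> T hT k V HV; apply: te_refl; by apply subst_pres.
- move=> T S _ IH k V HV; apply: te_sym; by apply IH.
- move=> T S Q _ I1 _ I2 k V HV; apply: te_trans (I1 k V HV) (I2 k V HV).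
- move=> a k V HV; apply: te_scal0.
- move=> T hT k V HV; apply: te_zero; by apply subst_pres.
- move=> T hT k V HV; apply: te_one; by apply subst_pres.
- move=> a b T hT k V HV; apply: te_mul; by apply subst_pres.
- move=> a T hT k V HV; apply: te_forall_scal; apply subst_pres => //; by apply shift_pres.
- move=> U U' T T' hU hU' _ I1 _ I2 k V HV; apply: te_cong_arrow; try apply subst_pres; auto.
- move=> T T' _ I k V HV; apply: te_cong_forall; apply I; by apply shift_pres.
- move=> a T T' _ I k V HV; apply: te_cong_scal; auto.
Qed.

Lemma map_subst_shift (G : seq ty) k V :
  map (tsubst k V) (map (tshift k) G) = G.
Proof. by elim: G => //= X G ->; rewrite subst_shift_id. Qed.

Lemma map_subst_shift_comm (G : seq ty) k V :
  map (tsubst k.+1 (tshift 0 V)) (map (tshift 0) G) = map (tshift 0) (map (tsubst k V) G).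
Proof. by elim: G => //= X G ->; rewrite subst_shift_comm. Qed.

Lemma typ_subst (G : seq ty) s T : typ G s T -> forall k V, is_unit V ->
  typ (map (tsubst k V) G) s (tsubst k V T).
Proof.
elim=> {G s T} /=.
- move=> G t t' T _ IH H k V HV; apply: ty_ac (IH k V HV) H.
- move=> G n U H k V HV; apply: ty_ax; by rewrite onth_map H.
- move=> G t T S _ IH H k V HV; apply: ty_equiv (IH k V HV) _; exact: tequiv_subst.
- move=> G t r a b U T _ I1 _ I2 k V HV; apply: ty_arrE (I1 k V HV) (I2 k V HV).
- move=> G t U T hU _ IH k V HV; apply: ty_arrI; first by apply subst_pres.
  exact: (IH k V HV).
- move=> G t T U hU _ IH k V HV.
  rewrite -subst_subst //.
  apply: ty_forallE; first by apply subst_pres.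
  exact: (IH k V HV).
- move=> G t T _ IH k V HV; apply: ty_forallI.
  rewrite -map_subst_shift_comm; apply: IH; by apply shift_pres.
- move=> G k V HV; apply: ty_ax0.
- move=> G t r a b T _ I1 _ I2 k V HV; apply: ty_plusI (I1 k V HV) (I2 k V HV).
- move=> G t a T _ IH k V HV; apply: ty_sI (IH k V HV).
Qed.

Lemma ac_lam_inv (a b : sterm R) : ac_eq a b ->
  (forall x, a = tLam x -> exists y, b = tLam y /\ ac_eq x y) /\
  (forall y, b = tLam y -> exists x, a = tLam x /\ ac_eq x y).
Proof.
elim=> {a b}.
- move=> t; split=> x ->; exists x; split=> //; apply: ac_refl.
- move=> t r _ [I1 I2]; split.
  + move=> x Hx; case: (I2 x Hx) => y [-> Hy]; exists y; split=> //; exact: ac_sym.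
  + move=> y Hy; case: (I1 y Hy) => x [-> Hx]; exists x; split=> //; exact: ac_sym.
- move=> t r s _ [I1 I2] _ [J1 J2]; split.
  + move=> x Hx; case: (I1 x Hx) => y [Hy Hxy]; case: (J1 y Hy) => z [Hz Hyz].
    exists z; split=> //; exact: ac_trans Hxy Hyz.
  + move=> z Hz; case: (J2 z Hz) => y [Hy Hyz]; case: (I2 y Hy) => x [Hx Hxy].
    exists x; split=> //; exact: ac_trans Hxy Hyz.
- move=> t t' H _; split=> x [<-]; [exists t' | exists t]; by split.
- by move=> *; split=> x.
- by move=> *; split=> x.
- by move=> *; split=> x.
- by move=> *; split=> x.
- by move=> *; split=> x.
Qed.

Lemma ac_lam (s t : sterm R) : ac_eq s (tLam t) -> exists x, s = tLam x /\ ac_eq x t.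
Proof. move=> H; case: (ac_lam_inv H) => _ I; exact: I. Qed.

Fixpoint cequiv (G G' : seq ty) : Prop :=
  match G, G' with
  | [::], [::] => True
  | A :: G, B :: G' => (A = B \/ tequiv B A) /\ cequiv G G'
  | _, _ => False
  end.

Lemma cequiv_refl (G : seq ty) : cequiv G G.
Proof. by elim: G => //= A G IH; split=> //; left. Qed.

Lemma cequiv_shift (G G' : seq ty) : cequiv G G' -> cequiv (map (tshift 0) G) (map (tshift 0) G').
Proof.
elim: G G' => [|A G IH] [|B G'] //= [[->|H] H2]; split; auto.
right; exact: tequiv_shift.
Qed.

Lemma cequiv_onth (G G' : seq ty) n U : cequiv G G' -> onth G n = Some U ->
  exists B, onth G' n = Some B /\ (U = B \/ tequiv B U).
Proof.
elim: G G' n => [|A G IH] [|B G'] [|n] //= [H1 H2] HU.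
- case: HU => HU; subst A; by exists B.
- exact: IH H2 HU.
Qed.

Lemma typ_ctx (G : seq ty) s T : typ G s T -> forall G', cequiv G G' -> typ G' s T.
Proof.
elim=> {G s T}.
- move=> G t t' T _ IH H G' HG; apply: ty_ac (IH G' HG) H.
- move=> G n U H G' HG; case: (cequiv_onth HG H) => B [HB [->|E]].
  + exact: ty_ax.
  + apply: ty_equiv E; exact: ty_ax.
- move=> G t T S _ IH H G' HG; apply: ty_equiv (IH G' HG) H.
- move=> G t r a b U T _ I1 _ I2 G' HG; apply: ty_arrE (I1 G' HG) (I2 G' HG).
- move=> G t U T hU _ IH G' HG; apply: ty_arrI => //; apply: IH => /=; split=> //; by left.
- move=> G t T U hU _ IH G' HG; apply: ty_forallE => //; exact: IH.
- move=> G t T _ IH G' HG; apply: ty_forallI; apply: IH; exact: cequiv_shift.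
- move=> G G' HG; apply: ty_ax0.
- move=> G t r a b T _ I1 _ I2 G' HG; apply: ty_plusI (I1 G' HG) (I2 G' HG).
- move=> G t a T _ IH G' HG; apply: ty_sI (IH G' HG).
Qed.

Fixpoint scal (T : ty) : R :=
  match T with
  | TVar _ => 1
  | TArrow _ _ => 1
  | TForall T => scal T
  | TScal a T => a * scal T
  | TZero => 0
  end.

Lemma scal_equiv (A B : ty) : tequiv A B -> scal A = scal B.
Proof.
elim=> {A B} /=.
- by [].
- by move=> T S _ ->.
- by move=> T S Q _ -> _ ->.
- by move=> a; rewrite mulr0.
- by move=> T _; rewrite mul0r.
- by move=> T _; rewrite mul1r.
- by move=> a b T _; rewrite mulrA.
- by [].
- by [].
- by move=> T T' _ ->.
- by move=> a T T' _ ->.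
Qed.

Lemma scal_unit (V : ty) : is_unit V -> scal V = 1.
Proof. by elim: V => //=. Qed.

Lemma scal_subst (T V : ty) k : is_unit V -> scal (tsubst k V T) = scal T.
Proof.
elim: T k V => [n|U IU T IT|T IT|a T IT|] k V HV //=.
- case: eqP => _; first exact: scal_unit. by case: ifP.
- apply: IT; by apply shift_pres.
- by rewrite IT.
Qed.

Fixpoint Q (G : seq ty) (t : sterm R) (T : ty) : Prop :=
  match T with
  | TVar _ => False
  | TArrow U T => typ (U :: G) t T
  | TForall T => Q (map (tshift 0) G) t T
  | TScal _ T => Q G t T
  | TZero => False
  end.

Lemma Q_equiv (A B : ty) : tequiv A B -> forall G t, scal A != 0 -> (Q G t A <-> Q G t B).
Proof.
elim=> {A B} //=.
- move=> T S E IH G t H; rewrite -(scal_equiv E) in H; exact: iff_sym (IH G t H).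
- move=> T S P E1 I1 E2 I2 G t H; rewrite (I1 G t H); apply: I2.
  by rewrite -(scal_equiv E1).
- by move=> T _ G t; rewrite mul0r eqxx.
- move=> U U' T T' hU hU' EU _ ET _ G t _; split=> H.
  + apply: (ty_equiv _ ET); apply: (typ_ctx H) => /=; split; [right; exact: te_sym EU | exact: cequiv_refl].
  + apply: (ty_equiv _ (te_sym ET)); apply: (typ_ctx H) => /=; split; [right; exact: EU | exact: cequiv_refl].
- move=> T T' _ IH G t H; exact: IH.
- move=> a T T' _ IH G t H; apply: IH.
  by apply: contra H => /eqP ->; rewrite mulr0.
Qed.

Lemma Q_subst (T : ty) (G : seq ty) t k V : is_unit V -> Q G t T ->
  Q (map (tsubst k V) G) t (tsubst k V T).
Proof.
elim: T G k V => [n|U IU T IT|T IT|a T IT|] G k V HV //=.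
- move=> H; exact: (typ_subst H k HV).
- move=> H; rewrite -map_subst_shift_comm; apply: IT => //; by apply shift_pres.
- exact: IT.
Qed.

Lemma main_inv (G : seq ty) s S : typ G s S -> forall t, ac_eq s (tLam t) -> scal S != 0 -> Q G t S.
Proof.
elim=> {G s S}.
- move=> G t t' T _ IH H t0 H0; apply: IH; exact: ac_trans H H0.
- by move=> G n U _ t H; case: (ac_lam H) => x [].
- move=> G t T S _ IH E t0 H0 HS; rewrite -(scal_equiv E) in HS.
  rewrite -(Q_equiv E) //; exact: IH.
- by move=> G t r a b U T _ _ _ _ t0 H; case: (ac_lam H) => x [].
- move=> G t U T hU HT _ t0 H _; case: (ac_lam H) => x [[<-] Hx] /=.
  exact: ty_ac HT Hx.
- move=> G t T U hU _ IH t0 H HS.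
  rewrite -(map_subst_shift G 0 U); apply: Q_subst => //.
  by apply: IH => //; rewrite (scal_subst _ _ hU) in HS.
- move=> G t T _ IH t0 H HS /=; exact: IH.
- by move=> G t H; case: (ac_lam H) => x [].
- by move=> G t r a b T _ _ _ _ t0 H; case: (ac_lam H) => x [].
- by move=> G t a T _ _ t0 H; case: (ac_lam H) => x [].
Qed.

Lemma all_onth (G : seq ty) n U : all (@is_unit R) G -> onth G n = Some U -> is_unit U.
Proof.
elim: G n => [|A G IH] [|n] //= /andP [hA hG]; first by case=> <-.
exact: IH.
Qed.

Lemma all_shift (G : seq ty) : all (@is_unit R) G -> all (@is_unit R) (map (tshift 0) G).
Proof. elim: G => //= A G IH /andP [hA hG]; apply/andP; split; auto; by apply shift_pres. Qed.

Lemma typ_wf (G : seq ty) s T : typ G s T -> all (@is_unit R) G -> wf T.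
Proof.
elim=> {G s T} //=.
- move=> G n U H HG; apply: unit_wf; exact: all_onth HG H.
- move=> G t T S _ IH E HG; by case: (tequiv_wf E).
- move=> G t r a b U T _ IH _ _ HG; by case/andP: (IH HG).
- move=> G t U T hU _ IH HG; rewrite hU; apply: IH => /=; by rewrite hU.
- move=> G t T U hU _ IH HG; apply subst_pres => //; exact: IH.
- move=> G t T _ IH HG; apply: IH; exact: all_shift.
Qed.

Lemma triv_inv (G : seq ty) s S : typ G s S -> all (@is_unit R) G -> forall t, ac_eq s (tLam t) ->
  exists U' T', is_unit U' /\ wf T' /\ typ (U' :: G) t T'.
Proof.
elim=> {G s S}.
- move=> G t t' T _ IH H HG t0 H0; apply: IH => //; exact: ac_trans H H0.
- by move=> G n U _ _ t H; case: (ac_lam H) => x [].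
- move=> G t T S _ IH E HG t0 H0; exact: IH.
- by move=> G t r a b U T _ _ _ _ _ t0 H; case: (ac_lam H) => x [].
- move=> G t U T hU HT _ HG t0 H; case: (ac_lam H) => x [[<-] Hx].
  exists U, T; split=> //; split; last exact: ty_ac HT Hx.
  apply: (typ_wf HT); by rewrite /= hU HG.
- move=> G t T U hU _ IH HG t0 H; exact: IH.
- move=> G t T _ IH HG t0 H.
  case: (IH (all_shift HG) t0 H) => U' [T' [hU [hT HT]]].
  have HV : is_unit (TVar R 0) by [].
  have HT' := typ_subst HT 0 HV; rewrite /= map_subst_shift in HT'.
  exists (tsubst 0 (TVar R 0) U'), (tsubst 0 (TVar R 0) T'); split; first by apply subst_pres.
  split=> //; by apply subst_pres.
- by move=> G _ t H; case: (ac_lam H) => x [].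
- by move=> G t r a b T _ _ _ _ _ t0 H; case: (ac_lam H) => x [].
- by move=> G t a T _ _ _ t0 H; case: (ac_lam H) => x [].
Qed.

Lemma triv_zero (X : ty) : (1 : R) = 0 -> wf X -> tequiv X (TZero R).
Proof.
move=> h1 hX; apply: te_trans (te_sym (te_one hX)) _.
rewrite h1; exact: te_zero.
Qed.
End P.

Theorem mainTheorem8 (R : comPzRingType) (G : seq (stype R)) (t : sterm R)
    (T U : stype R) :
  all (@is_unit R) G -> is_unit U -> wf T ->
  typ G (tLam t) (TArrow U T) -> typ (U :: G) t T.
Proof.
move=> HG hU hT H.
case: (boolP ((1 : R) == 0)%R) => [/eqP h10 | h10].
- case: (triv_inv H HG (ac_refl _)) => U' [T' [hU' [hT' HT]]].
  apply: (ty_equiv _ (te_trans (triv_zero h10 hT') (te_sym (triv_zero h10 hT)))).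
  apply: (typ_ctx HT) => /=; split; last exact: cequiv_refl.
  right; apply: te_trans (triv_zero h10 (unit_wf hU)) (te_sym (triv_zero h10 (unit_wf hU'))).
- exact: (main_inv H (ac_refl _) h10).
Qed.
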